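(* Let $A(\chi)$ be the $n\times n$ matrix over the field of rational functions in indeterminates $\chi_1,\dots,\chi_n,\hbar,q_1,\dots,q_n$ with $A_{ii}=\chi_i$ and $A_{ij}=\frac{\hbar(1-q_i)(1+q_j)}{(1-q_i/q_j)(1-q_iq_j)}$ for $i\ne j$. For $\sigma\in\mathfrak S_n$ put $m_\sigma=A_{1\sigma(1)}\cdots A_{n\sigma(n)}$. Then $$\det A(\chi)=\sum_\sigma(-1)^{\ell(\sigma)}m_\sigma,$$ where the sum runs only over those permutations $\sigma$ all of whose nontrivial cycles have even length. Consequently $\det A(\chi)=(-1)^n\det A(-\chi)$, where $A(-\chi)$ denotes $A(\chi)$ with each $\chi_i$ replaced by $-\chi_i$.
   Context: $\ell(\sigma)$ denotes the number of inversions of $\sigma$, so $(-1)^{\ell(\sigma)}$ is its sign. *)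

(* Defs.v *)
From HB Require Import structures.
From mathcomp Require Import all_boot all_order all_algebra all_fingroup.
From mathcomp Require Import mpoly fraction.
Set Implicit Arguments. Unset Strict Implicit. Unset Printing Implicit Defensive.
Import Order.TTheory GRing.Theory.
Local Open Scope ring_scope.

(* Polynomial ring over Q in the 2n+1 indeterminates
   chi_0..chi_{n-1} (index i), hbar (index n), q_0..q_{n-1} (index n+1+i). *)
Definition RFpoly (n : nat) := {mpoly rat[(n + n).+1]}.
Definition RF (n : nat) := {fraction (RFpoly n)}.
Local Notation "x %:F" := (@FracField.tofrac _ x).

Definition chiv (n : nat) (i : 'I_n) : RF n := ('X_(inord i) : RFpoly n)%:F.
Definition hbarv (n : nat) : RF n := ('X_(inord n) : RFpoly n)%:F.
Definition qv (n : nat) (i : 'I_n) : RF n := ('X_(inord (n + 1 + i)) : RFpoly n)%:F.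

Definition Amat (n : nat) (c : 'I_n -> RF n) : 'M[RF n]_n :=
  \matrix_(i < n, j < n)
    if i == j then c i
    else hbarv n * (1 - qv i) * (1 + qv j)
         / ((1 - qv i / qv j) * (1 - qv i * qv j)).

Definition Achi (n : nat) : 'M[RF n]_n := Amat (@chiv n).
Definition Anegchi (n : nat) : 'M[RF n]_n := Amat (fun i => - chiv i).

Definition even_cycles (n : nat) (s : 'S_n) : bool :=
  [forall C in porbits s, (#|C| == 1)%N || ~~ odd #|C|].

Definition msigma (n : nat) (A : 'M[RF n]_n) (s : 'S_n) : RF n :=
  \prod_(i < n) A i (s i).

(* Main.v *)
Require Import Defs.
From HB Require Import structures.
From mathcomp Require Import all_boot all_order all_algebra all_fingroup.
From mathcomp Require Import mpoly fraction.
From mathcomp Require Import ring zify.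
Set Implicit Arguments. Unset Strict Implicit. Unset Printing Implicit Defensive.
Import GRing.Theory.
Local Open Scope ring_scope.
Local Notation "x %:F" := (@FracField.tofrac _ x).

Lemma gen_rel (F : fieldType) (h a b : F) :
  a != 0 -> b != 0 -> 1 - a != 0 -> 1 - b != 0 -> b - a != 0 ->
  1 - a * b != 0 ->
  h * (1 - b) * (1 + a) / ((1 - b / a) * (1 - b * a)) * (b * (1 + b) / (1 - b))
  = - (h * (1 - a) * (1 + b) / ((1 - a / b) * (1 - a * b)) * (a * (1 + a) / (1 - a))).
Proof.
move=> a0 b0 a1 b1 ab ab1.
have e1 : 1 - a / b = (b - a) / b by field.
have e2 : 1 - b / a = - ((b - a) / a) by field.
have ab2 : 1 - b * a != 0 by rewrite mulrC.
rewrite e1 e2. field.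
by rewrite a1 b0 ab1 ab b1 a0 oppr_eq0 ab.
Qed.
 

Section Perm.
Variable T : finType.
Implicit Types (s t : {perm T}) (x y z : T).

Lemma porbit_s s y : porbit s (s y) = porbit s y.
Proof. by have := porbit_perm s 1 y; rewrite expg1. Qed.

Lemma porbit_sV s y : porbit s (s^-1%g y) = porbit s y.
Proof. by rewrite -porbitV porbit_s porbitV. Qed.

Lemma memC s x y : (s y \in porbit s x) = (y \in porbit s x).
Proof. by rewrite porbit_sym porbit_s porbit_sym. Qed.

Lemma memCV s x y : (s^-1%g y \in porbit s x) = (y \in porbit s x).
Proof. by rewrite porbit_sym porbit_sV porbit_sym. Qed.

Lemma porbit_agree s t x : {in porbit s x, forall y, t y = s y} ->
  porbit t x = porbit s x.
Proof.
move=> h.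
have e : forall i, (t ^+ i)%g x = (s ^+ i)%g x.
  move=> i; rewrite !permX; elim: i => //= i ->.
  by rewrite h // -permX mem_porbit.
by apply/setP => z; apply/porbitP/porbitP => -[i ->]; exists i; rewrite e.
Qed.

Definition revf s x y := if y \in porbit s x then s^-1%g y else s y.

Lemma revf_mem s x y : (revf s x y \in porbit s x) = (y \in porbit s x).
Proof. by rewrite /revf; case: ifP => h; rewrite ?memC ?memCV h. Qed.

Lemma revf_inj s x : injective (revf s x).
Proof.
move=> y z e; have := revf_mem s x y; rewrite e revf_mem.
move: e; rewrite /revf; case: ifP => hz; case: ifP => hy //= e _.
- exact: (perm_inj e).
- exact: (perm_inj e).
Qed.

Definition rev s x : {perm T} := perm (@revf_inj s x).

Lemma revE s x y : rev s x y = revf s x y.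
Proof. by rewrite permE. Qed.

Lemma porbit_rev s x y : porbit (rev s x) y = porbit s y.
Proof.
case hy: (y \in porbit s x).
- rewrite -(porbitV s); apply: porbit_agree => z; rewrite porbitV => hz.
  have ey : porbit s y = porbit s x by apply/eqP; rewrite eq_porbit_mem hy.
  have hz' : z \in porbit s x by rewrite -ey.
  by rewrite revE /revf hz'.
- apply: porbit_agree => z hz; rewrite revE /revf.
  case: ifP => // hz'; exfalso.
  have e1 : porbit s z = porbit s y by apply/eqP; rewrite eq_porbit_mem.
  have e2 : porbit s z = porbit s x by apply/eqP; rewrite eq_porbit_mem.
  by move: hy; rewrite -eq_porbit_mem -e1 e2 eqxx.
Qed.

Lemma porbits_rev s x : porbits (rev s x) = porbits s.
Proof. by apply: eq_imset => y; rewrite porbit_rev. Qed.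

Lemma odd_perm_rev s x : odd_perm (rev s x) = odd_perm s.
Proof. by rewrite /odd_perm porbits_rev. Qed.

Lemma rev_rev s x : rev (rev s x) x = s.
Proof.
apply/permP => z; rewrite revE /revf porbit_rev.
case: ifP => hz; last by rewrite revE /revf hz.
apply: (@perm_inj _ (rev s x)); rewrite permKV revE /revf memC hz.
by rewrite permK.
Qed.

Definition bad s y := (1 < #|porbit s y|)%N && odd #|porbit s y|.

Definition phi s := if [pick y | bad s y] is Some y then rev s y else s.

Lemma bad_rev s x : bad (rev s x) =1 bad s.
Proof. by move=> y; rewrite /bad porbit_rev. Qed.

Lemma phiK : involutive phi.
Proof.
move=> s; case E: [pick y | bad s y] => [y|].
  have e1 : phi s = rev s y by rewrite /phi E.
  by rewrite e1 {1}/phi (eq_pick (bad_rev s y)) E rev_rev.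
have e1 : phi s = s by rewrite /phi E.
by rewrite !e1.
Qed.

Lemma porbits_phi s : porbits (phi s) = porbits s.
Proof. by rewrite /phi; case: pickP => // y _; rewrite porbits_rev. Qed.

Lemma fix_small s y : s y = y -> (#|porbit s y| <= 1)%N.
Proof.
move=> e; rewrite -(cards1 y); apply: subset_leq_card.
apply/subsetP => z /porbitP [i ->]; rewrite inE permX; apply/eqP.
by elim: i => //= i ->.
Qed.

End Perm.

Section Alg.
Variable n : nat.

Lemma nz_of_eval (p : RFpoly n) (v : 'I_(n+n).+1 -> rat) :
  meval v p != 0 -> p%:F != 0 :> RF n.
Proof. by move=> h; rewrite tofrac_eq0; apply: contraNneq h => ->; rewrite meval0. Qed.

Lemma qv_neq0 (i : 'I_n) : qv i != 0.
Proof. by apply: (@nz_of_eval _ (fun _ => 1)); rewrite mevalXU. Qed.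

Lemma onePq_neq0 (i : 'I_n) : 1 + qv i != 0.
Proof.
rewrite /qv -tofrac1 -tofracD; apply: (@nz_of_eval _ (fun _ => 0)).
by rewrite mevalD meval1 mevalXU addr0 oner_eq0.
Qed.

Lemma oneMq_neq0 (i : 'I_n) : 1 - qv i != 0.
Proof.
rewrite /qv -tofrac1 -tofracB; apply: (@nz_of_eval _ (fun _ => 0)).
by rewrite mevalB meval1 mevalXU subr0 oner_eq0.
Qed.

Lemma oneMqq_neq0 (i j : 'I_n) : 1 - qv i * qv j != 0.
Proof.
rewrite /qv -tofrac1 -tofracM -tofracB; apply: (@nz_of_eval _ (fun _ => 0)).
by rewrite mevalB meval1 mevalM !mevalXU mulr0 subr0 oner_eq0.
Qed.

Lemma qdiff_neq0 (i j : 'I_n) : i != j -> qv j - qv i != 0.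
Proof.
move=> ij; rewrite /qv -tofracB.
apply: (@nz_of_eval _ (fun k => if k == inord (n + 1 + j) then 1 else 0)).
rewrite mevalB !mevalXU eqxx.
have -> : (inord (n + 1 + i) == inord (n + 1 + j) :> 'I_(n+n).+1) = false.
  apply/negbTE; apply: contra ij => /eqP /(congr1 val) /=.
  have hi : (n + 1 + i < (n + n).+1)%N by have := ltn_ord i; have := ltn_ord j; lia.
  have hj : (n + 1 + j < (n + n).+1)%N by have := ltn_ord i; have := ltn_ord j; lia.
  rewrite (inordK hi) (inordK hj).
  by move/addnI/val_inj/eqP.
by rewrite subr0 oner_eq0.
Qed.

Definition psi (i : 'I_n) : RF n := qv i * (1 + qv i) / (1 - qv i).

Lemma psi_neq0 i : psi i != 0.
Proof.
by rewrite /psi !mulf_neq0 ?invr_eq0 ?qv_neq0 ?onePq_neq0 ?oneMq_neq0.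
Qed.


Lemma two_neq0 : (2%:R : RF n) != 0.
Proof.
have -> : (2%:R : RF n) = (1 + 1 : RFpoly n)%:F by rewrite tofracD tofrac1.
apply: (@nz_of_eval _ (fun _ => 0)); rewrite mevalD meval1.
by [].
Qed.

Lemma rel_off (c d : 'I_n -> RF n) (i j : 'I_n) : i != j ->
  Amat c j i * psi j = - (Amat d i j * psi i).
Proof.
move=> ij; rewrite !mxE (negbTE ij) eq_sym (negbTE ij) /psi.
apply: gen_rel; rewrite ?qv_neq0 ?oneMq_neq0 ?oneMqq_neq0 //.
exact: qdiff_neq0.
Qed.

Lemma rel_all (i j : 'I_n) :
  Achi n j i * psi j = - (Anegchi n i j * psi i).
Proof.
case: (eqVneq i j) => [<-|ij]; last exact: rel_off.
by rewrite !mxE eqxx mulNr opprK.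
Qed.
End Alg.

Section Main.
Variable n : nat.

Lemma Psi_neq0 (P : pred 'I_n) : \prod_(i | P i) psi i != 0.
Proof. by apply/prodf_neq0 => i _; exact: psi_neq0. Qed.

Lemma msigma_rev (s : 'S_n) y : bad s y ->
  msigma (Achi n) (rev s y) = - msigma (Achi n) s.
Proof.
move=> hb.
set C := porbit s y.
rewrite /msigma (bigID (fun i => i \in C)) /= [in RHS](bigID (fun i => i \in C)) /=.
rewrite [X in _ * X = _](eq_bigr (fun i => Achi n i (s i))); last first.
  by move=> i /negbTE h; rewrite revE /revf h.
rewrite -mulNr; congr (_ * _).
rewrite (eq_bigr (fun i => Achi n i (s^-1%g i))); last first.
  by move=> i h; rewrite revE /revf h.
rewrite (reindex_inj (@perm_inj _ s)) /=.
rewrite (eq_bigl (fun j => j \in C)); last by move=> j; rewrite memC.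
rewrite (eq_bigr (fun j => Achi n (s j) j)); last by move=> j _; rewrite permK.
apply: (mulIf (Psi_neq0 (fun j => j \in C))).
have ePsi : \prod_(j | j \in C) psi j = \prod_(j | j \in C) psi (s j).
  rewrite (reindex_inj (@perm_inj _ s)) /=.
  by apply: eq_bigl => j; rewrite memC.
rewrite {1}ePsi -big_split /=.
rewrite (eq_bigr (fun j => - (Achi n j (s j) * psi j))); last first.
  move=> j hj; apply: rel_off.
  apply/eqP => e.
  have := fix_small (esym e).
  have -> : porbit s j = C by apply/eqP; rewrite eq_porbit_mem.
  by case/andP: hb => h1 _; rewrite leqNgt h1.
rewrite prodrN big_split /= -signr_odd.
by case/andP: hb => _ ->; rewrite expr1 !mulN1r mulNr.
Qed.

Lemma even_phi (s : 'S_n) : even_cycles (phi s) = even_cycles s.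
Proof. by rewrite /even_cycles porbits_phi. Qed.

Lemma not_even_bad (s : 'S_n) : ~~ even_cycles s ->
  exists y, [pick y | bad s y] = Some y /\ bad s y.
Proof.
move/forallPn => [C]; rewrite negb_imply => /andP[/imsetP[y _ ->] h].
have hy : bad s y.
  rewrite /bad; move: h; rewrite negb_or negbK => /andP[h1 ->].
  by rewrite andbT ltn_neqAle eq_sym h1 lt0n card_porbit_neq0.
case: pickP => [z hz|h0]; first by exists z.
by move: (h0 y); rewrite hy.
Qed.

Lemma sum_bad :
  \sum_(s : 'S_n | ~~ even_cycles s) (-1) ^+ s * msigma (Achi n) s = 0.
Proof.
set S := (X in X = 0).
have eS : S = - S.
  rewrite {1}/S (reindex_inj (can_inj (@phiK _))) /=.
  rewrite (eq_bigl (fun s => ~~ even_cycles s)); last by move=> s; rewrite even_phi.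
  rewrite /S -sumrN; apply: eq_bigr => s hs.
  have [y [E hy]] := not_even_bad hs.
  have -> : phi s = rev s y by rewrite /phi E.
  by rewrite odd_perm_rev msigma_rev // mulrN.
have : 2%:R * S = 0 by rewrite mulr_natl mulr2n {1}eS addNr.
by move/eqP; rewrite mulf_eq0 (negbTE (@two_neq0 n)) /= => /eqP.
Qed.

Lemma prod_tr (s : 'S_n) :
  \prod_i Achi n (s i) i = (-1) ^+ n * \prod_i Anegchi n i (s i).
Proof.
apply: (mulIf (Psi_neq0 predT)).
have ePsi : \prod_(j | predT j) psi j = \prod_(j | predT j) psi (s j).
  by rewrite (reindex_inj (@perm_inj _ s)).
rewrite {1}ePsi -big_split /=.
rewrite (eq_bigr (fun j => -1 * (Anegchi n j (s j) * psi j))); last first.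
  by move=> j _; rewrite rel_all mulN1r.
rewrite big_split /= prodr_const card_ord -mulrA; congr (_ * _).
by rewrite big_split.
Qed.
End Main.

Theorem mainTheorem16 (n : nat) :
  \det (Achi n) =
    \sum_(s : 'S_n | even_cycles s) (-1) ^+ s * msigma (Achi n) s
  /\ \det (Achi n) = (-1) ^+ n * \det (Anegchi n).
Proof.
split.
  rewrite /determinant (bigID (@even_cycles n)) /=.
  by rewrite [X in _ + X]sum_bad addr0.
rewrite -det_tr /determinant mulr_sumr; apply: eq_bigr => s _.
rewrite mulrCA; congr (_ * _).
rewrite -prod_tr; apply: eq_bigr => i _; by rewrite mxE.
Qed.
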